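(* Let $\mathbb{T}$ be a time scale unbounded from above, $t_0\in\mathbb{T}$, and let $b,c$ be constants with $0\le b<c$. Let $x_0>0$, $y_0>0$, $z_0\ge0$, $N=x_0+y_0+z_0$. Then every solution $(x,y,z)$ of $$x^{\Delta}=-\frac{b\,x\,y^{\sigma}}{x+y},\qquad y^{\Delta}=\frac{b\,x\,y^{\sigma}}{x+y}-c\,y^{\sigma},\qquad z^{\Delta}=c\,y^{\sigma},$$ with $x,y:\mathbb{T}\to(0,\infty)$, $z:\mathbb{T}\to[0,\infty)$, $x(t_0)=x_0$, $y(t_0)=y_0$, $z(t_0)=z_0$, converges as $t\to\infty$ to $(\alpha,0,N-\alpha)$ for some $\alpha\in(0,N)$.
   Context: A time scale $\mathbb{T}$ is a nonempty closed subset of $\mathbb{R}$. $\sigma(t)=\inf\{s\in\mathbb{T}:s>t\}$, $f^{\sigma}=f\circ\sigma$. $f^{\Delta}$ is the delta (Hilger) derivative: for every $\varepsilon>0$ there is $\delta>0$ with $|f(\sigma(t))-f(s)-f^{\Delta}(t)(\sigma(t)-s)|\le\varepsilon|\sigma(t)-s|$ for $s\in(t-\delta,t+\delta)\cap\mathbb{T}$. *)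

(* Defs.v *)
From Stdlib Require Import Reals.
From Coquelicot Require Import Coquelicot.
Open Scope R_scope.

Definition time_scale (T : R -> Prop) : Prop :=
  (exists t, T t) /\ closed T.

Definition unbounded_above (T : R -> Prop) : Prop :=
  forall M : R, exists t, T t /\ M < t.

(* Forward jump operator sigma(t) = inf {s in T : s > t}.
   (For T unbounded above the set is nonempty and bounded below by t,
    so the Rbar infimum is finite.) *)
Definition fjump (T : R -> Prop) (t : R) : R :=
  real (Glb_Rbar (fun s => T s /\ t < s)).

Definition delta_derivative (T : R -> Prop) (f : R -> R) (t l : R) : Prop :=
  forall eps : R, 0 < eps ->
    exists delta : R, 0 < delta /\
      forall s : R, T s -> Rabs (s - t) < delta ->
        Rabs (f (fjump T t) - f s - l * (fjump T t - s))
          <= eps * Rabs (fjump T t - s).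

Definition converges_at_infty (T : R -> Prop) (f : R -> R) (l : R) : Prop :=
  forall eps : R, 0 < eps ->
    exists M : R, forall t : R, T t -> M <= t -> Rabs (f t - l) < eps.

(* Main.v *)
Require Import Defs.
From Stdlib Require Import Reals Lra Classical.
From Coquelicot Require Import Coquelicot.
Open Scope R_scope.

Lemma ab_le x y : Rabs x <= y -> - y <= x <= y.
Proof. apply Rabs_le_between. Qed.
Lemma ab_lt x y : Rabs x < y -> - y < x < y.
Proof. unfold Rabs; destruct (Rcase_abs x); lra. Qed.
Lemma ab_le' x y : - y <= x <= y -> Rabs x <= y.
Proof. apply Rabs_le_between. Qed.
Lemma ab_lt' x y : - y < x < y -> Rabs x < y.
Proof. unfold Rabs; destruct (Rcase_abs x); lra. Qed.

Lemma zero_of_small (A D : R) :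
  (forall eps, 0 < eps -> Rabs A <= eps * Rabs D) -> A = 0.
Proof.
  intros H. destruct (Req_dec A 0) as [|Hne]; auto. exfalso.
  assert (HA : 0 < Rabs A) by (apply Rabs_pos_lt; auto).
  assert (HD := Rabs_pos D).
  set (e := Rabs A / (2 * (Rabs D + 1))).
  assert (He : 0 < e) by (unfold e; apply Rdiv_lt_0_compat; lra).
  specialize (H e He).
  assert (e * (2 * (Rabs D + 1)) = Rabs A) by (unfold e; field; lra).
  nra.
Qed.

Section FJ.
Variable T : R -> Prop.
Hypothesis hT : time_scale T.
Hypothesis hunb : unbounded_above T.

Lemma fj_spec t :
  (forall s, T s -> t < s -> fjump T t <= s) /\
  (forall m, (forall s, T s -> t < s -> m <= s) -> m <= fjump T t).
Proof.
  unfold fjump.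
  destruct (Glb_Rbar_correct (fun s => T s /\ t < s)) as [H1 H2].
  destruct (hunb t) as [s0 [Hs0 Hts0]].
  assert (Hlb : Rbar_le t (Glb_Rbar (fun s => T s /\ t < s))).
  { apply H2. intros u [_ Hu]. simpl. lra. }
  assert (Hub : Rbar_le (Glb_Rbar (fun s => T s /\ t < s)) s0).
  { apply H1. split; auto. }
  destruct (Glb_Rbar (fun s => T s /\ t < s)) as [g| |]; simpl in *; try tauto.
  split.
  - intros s Hs Hts. apply (H1 s). split; auto.
  - intros m Hm. apply (H2 (Finite m)). intros u [Hu1 Hu2]. simpl. auto.
Qed.

Lemma fj_le t s : T s -> t < s -> fjump T t <= s.
Proof. apply (proj1 (fj_spec t)). Qed.
Lemma fj_glb t m : (forall s, T s -> t < s -> m <= s) -> m <= fjump T t.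
Proof. apply (proj2 (fj_spec t)). Qed.
Lemma fj_ge t : t <= fjump T t.
Proof. apply fj_glb. intros; lra. Qed.

Lemma closed_approx m : (forall e, 0 < e -> exists s, T s /\ Rabs (s - m) < e) -> T m.
Proof.
  intros H. destruct hT as [_ Hc]. apply Hc. intros [eps Heps].
  destruct (H eps (cond_pos eps)) as [s [Hs Hsm]].
  apply (Heps s); auto.
Qed.

Lemma fj_in t : T (fjump T t).
Proof.
  apply closed_approx. intros e He.
  destruct (classic (exists s, T s /\ t < s /\ s < fjump T t + e)) as [[s [Hs [H1 H2]]]|Hn].
  - exists s. split; auto. apply ab_lt'. pose proof (fj_le t s Hs H1). lra.
  - exfalso. assert (fjump T t + e <= fjump T t); [|lra].
    apply fj_glb. intros s Hs Hts. apply Rnot_lt_le. intro. apply Hn. eauto.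
Qed.
End FJ.

Lemma dd_exact T f t l : T t -> delta_derivative T f t l ->
  f (fjump T t) - f t = l * (fjump T t - t).
Proof.
  intros Ht H.
  assert (f (fjump T t) - f t - l * (fjump T t - t) = 0); [|lra].
  apply zero_of_small with (D := fjump T t - t).
  intros e He. destruct (H e He) as [d [Hd Hs]].
  apply Hs; auto. rewrite Rminus_eq_0, Rabs_R0. lra.
Qed.

Lemma dd_cont T f t l : T t -> delta_derivative T f t l ->
  forall eta, 0 < eta -> exists d, 0 < d /\ forall s, T s -> Rabs (s - t) < d ->
    Rabs (f s - f t) < eta.
Proof.
  intros Ht H eta Heta.
  set (D := Rabs (fjump T t - t)).
  set (K := D + Rabs l + 1).
  assert (HD : 0 <= D) by apply Rabs_pos.
  assert (Hl : 0 <= Rabs l) by apply Rabs_pos.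
  assert (HK : 0 < K) by (unfold K; lra).
  set (e := eta / (4 * K)).
  assert (He : 0 < e) by (unfold e; apply Rdiv_lt_0_compat; lra).
  assert (HeK : e * (4 * K) = eta) by (unfold e; field; lra).
  destruct (H e He) as [d [Hd Hs]].
  exists (Rmin d (Rmin 1 e)). split.
  { apply Rmin_pos; auto. apply Rmin_pos; lra. }
  intros s HTs Hst.
  assert (Hst1 : Rabs (s - t) < d) by (eapply Rlt_le_trans; [exact Hst|apply Rmin_l]).
  assert (Hst2 : Rabs (s - t) < 1) by (eapply Rlt_le_trans; [exact Hst|]; eapply Rle_trans; [apply Rmin_r|apply Rmin_l]).
  assert (Hst3 : Rabs (s - t) < e) by (eapply Rlt_le_trans; [exact Hst|]; eapply Rle_trans; [apply Rmin_r|apply Rmin_r]).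
  pose proof (Hs s HTs Hst1) as A.
  assert (Ht0 : Rabs (t - t) < d) by (rewrite Rminus_eq_0, Rabs_R0; lra).
  pose proof (Hs t Ht Ht0) as B.
  assert (E : f s - f t = (f (fjump T t) - f t - l * (fjump T t - t))
                 - (f (fjump T t) - f s - l * (fjump T t - s)) + l * (s - t)) by ring.
  rewrite E.
  assert (Hss : Rabs (fjump T t - s) <= D + Rabs (s - t)).
  { unfold D. replace (fjump T t - s) with ((fjump T t - t) + - (s - t)) by ring.
    eapply Rle_trans; [apply Rabs_triang|]. rewrite Rabs_Ropp. lra. }
  eapply Rle_lt_trans. apply Rabs_triang.
  eapply Rle_lt_trans. apply Rplus_le_compat_r. unfold Rminus at 1. apply Rabs_triang.
  rewrite Rabs_Ropp, Rabs_mult.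
  assert (Hp : 0 <= Rabs (s - t)) by apply Rabs_pos.
  assert (X1 : e * Rabs (fjump T t - s) <= e * (D + 1)) by (apply Rmult_le_compat_l; lra).
  assert (X2 : Rabs l * Rabs (s - t) <= Rabs l * e) by (apply Rmult_le_compat_l; lra).
  fold D in B.
  assert (X3 : Rabs l * e <= K * e) by (apply Rmult_le_compat_r; unfold K; lra).
  assert (X4 : e * D + e * (D + 1) + K * e < eta).
  { rewrite <- HeK. unfold K. nra. }
  lra.
Qed.

Lemma dd_ext T f g t l l' : (forall r, g r = f r) -> l = l' ->
  delta_derivative T f t l -> delta_derivative T g t l'.
Proof.
  intros Hfg <- H e He. destruct (H e He) as [d [Hd Hs]]. exists d; split; auto.
  intros s Hs1 Hs2. rewrite !Hfg. auto.
Qed.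

Lemma dd_lin T f g t l1 l2 k : delta_derivative T f t l1 -> delta_derivative T g t l2 ->
  delta_derivative T (fun r => f r + k * g r) t (l1 + k * l2).
Proof.
  intros Hf Hg e He.
  assert (Hk := Rabs_pos k).
  set (e1 := e / (2 * (Rabs k + 1))).
  assert (He1 : 0 < e1) by (unfold e1; apply Rdiv_lt_0_compat; lra).
  assert (He1k : e1 * (2 * (Rabs k + 1)) = e) by (unfold e1; field; lra).
  destruct (Hf e1 He1) as [d1 [Hd1 H1]]. destruct (Hg e1 He1) as [d2 [Hd2 H2]].
  exists (Rmin d1 d2). split; [apply Rmin_pos; auto|].
  intros s Hs Hst.
  assert (A := H1 s Hs (Rlt_le_trans _ _ _ Hst (Rmin_l _ _))).
  assert (B := H2 s Hs (Rlt_le_trans _ _ _ Hst (Rmin_r _ _))).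
  replace (f (fjump T t) + k * g (fjump T t) - (f s + k * g s) - (l1 + k * l2) * (fjump T t - s))
    with ((f (fjump T t) - f s - l1 * (fjump T t - s)) + k * (g (fjump T t) - g s - l2 * (fjump T t - s))) by ring.
  eapply Rle_trans. apply Rabs_triang. rewrite Rabs_mult.
  assert (Hd := Rabs_pos (fjump T t - s)).
  assert (Rabs k * Rabs (g (fjump T t) - g s - l2 * (fjump T t - s)) <= Rabs k * (e1 * Rabs (fjump T t - s)))
    by (apply Rmult_le_compat_l; auto).
  assert (e1 * Rabs (fjump T t - s) + Rabs k * (e1 * Rabs (fjump T t - s)) <= e * Rabs (fjump T t - s)).
  { rewrite <- He1k. nra. }
  lra.
Qed.

Lemma dd_const T c t : delta_derivative T (fun _ => c) t 0.
Proof. intros e He. exists 1. split; [lra|]. intros. replace (c - c - 0 * (fjump T t - s)) with 0 by ring.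
  rewrite Rabs_R0. apply Rmult_le_pos; [lra|apply Rabs_pos]. Qed.

Lemma dd_id T t : delta_derivative T (fun r => r) t 1.
Proof. intros e He. exists 1. split; [lra|]. intros. replace (fjump T t - s - 1 * (fjump T t - s)) with 0 by ring.
  rewrite Rabs_R0. apply Rmult_le_pos; [lra|apply Rabs_pos]. Qed.

Lemma cont_quot T f g t :
  (forall eta, 0 < eta -> exists d, 0 < d /\ forall s, T s -> Rabs (s - t) < d -> Rabs (f s - f t) < eta) ->
  (forall eta, 0 < eta -> exists d, 0 < d /\ forall s, T s -> Rabs (s - t) < d -> Rabs (g s - g t) < eta) ->
  g t <> 0 ->
  forall eta, 0 < eta -> exists d, 0 < d /\ forall s, T s -> Rabs (s - t) < d ->
    g s <> 0 /\ Rabs (f s / g s - f t / g t) < eta.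
Proof.
  intros Hf Hg Hgt eta Heta.
  set (G := Rabs (g t)). assert (HG : 0 < G) by (apply Rabs_pos_lt; auto).
  set (F := Rabs (f t)). assert (HF : 0 <= F) by apply Rabs_pos.
  assert (H1 : 0 < eta * G / 4) by (apply Rdiv_lt_0_compat; nra).
  set (e2 := Rmin (G / 2) (eta * G * G / (4 * (F + 1)))).
  assert (H2 : 0 < e2).
  { apply Rmin_pos; [lra|]. apply Rdiv_lt_0_compat; [|lra]. apply Rmult_lt_0_compat; nra. }
  destruct (Hf _ H1) as [d1 [Hd1 Hf1]]. destruct (Hg _ H2) as [d2 [Hd2 Hg2]].
  exists (Rmin d1 d2). split; [apply Rmin_pos; auto|].
  intros s Hs Hst.
  assert (A := Hf1 s Hs (Rlt_le_trans _ _ _ Hst (Rmin_l _ _))).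
  assert (B := Hg2 s Hs (Rlt_le_trans _ _ _ Hst (Rmin_r _ _))).
  assert (B1 : Rabs (g s - g t) < G / 2) by (eapply Rlt_le_trans; [exact B|apply Rmin_l]).
  assert (B2 : Rabs (g s - g t) < eta * G * G / (4 * (F + 1))) by (eapply Rlt_le_trans; [exact B|apply Rmin_r]).
  assert (Hgs : G / 2 < Rabs (g s)).
  { pose proof (Rabs_triang_inv (g t) (g s)). rewrite <- Rabs_Ropp in B1.
    replace (- (g s - g t)) with (g t - g s) in B1 by ring. fold G in H. lra. }
  assert (Hgs0 : g s <> 0).
  { intro E. rewrite E, Rabs_R0 in Hgs. lra. }
  split; auto.
  replace (f s / g s - f t / g t) with (((f s - f t) * g t - f t * (g s - g t)) / (g s * g t))
    by (field; auto).
  rewrite Rabs_div by (apply Rmult_integral_contrapositive; auto).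
  rewrite Rabs_mult. fold G.
  apply Rlt_div_l. { apply Rmult_lt_0_compat; lra. }
  eapply Rle_lt_trans. unfold Rminus at 1. apply Rabs_triang.
  rewrite Rabs_Ropp, !Rabs_mult. fold G F.
  assert (X1 : Rabs (f s - f t) * G <= eta * G / 4 * G) by (apply Rmult_le_compat_r; lra).
  assert (X2 : F * Rabs (g s - g t) <= F * (eta * G * G / (4 * (F + 1)))) by (apply Rmult_le_compat_l; lra).
  assert (X3 : F * (eta * G * G / (4 * (F + 1))) <= eta * G * G / 4).
  { replace (F * (eta * G * G / (4 * (F + 1)))) with ((F / (F + 1)) * (eta * G * G / 4)) by (field; lra).
    assert (F / (F + 1) <= 1) by (apply Rle_div_l; lra).
    assert (0 <= eta * G * G / 4) by (apply Rle_mult_inv_pos; [nra|lra]). nra. }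
  assert (X4 : eta * (G / 2 * G) < eta * (Rabs (g s) * G)).
  { apply Rmult_lt_compat_l; [lra| apply Rmult_lt_compat_r; lra]. }
  assert (X5 : eta * G / 4 * G + eta * G * G / 4 = eta * (G / 2 * G)) by field.
  lra.
Qed.

Lemma dd_quot T f g t l1 l2 : T t ->
  delta_derivative T f t l1 -> delta_derivative T g t l2 ->
  g t <> 0 -> g (fjump T t) <> 0 ->
  delta_derivative T (fun r => f r / g r) t ((l1 * g t - f t * l2) / (g t * g (fjump T t))).
Proof.
  intros Ht Hf Hg Hgt Hgs e He.
  set (sg := fjump T t) in *.
  set (Gs := Rabs (g sg)). assert (HGs : 0 < Gs) by (apply Rabs_pos_lt; auto).
  set (Q := Rabs (f t / g t)). assert (HQ : 0 <= Q) by apply Rabs_pos.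
  assert (HL := Rabs_pos l2).
  set (eta1 := Rmin 1 (e * Gs / (2 * (Rabs l2 + 1)))).
  assert (Heta1 : 0 < eta1).
  { apply Rmin_pos; [lra|]. apply Rdiv_lt_0_compat; nra. }
  set (e1 := e * Gs / (2 * (2 + Q))).
  assert (He1 : 0 < e1) by (apply Rdiv_lt_0_compat; nra).
  destruct (cont_quot T f g t (dd_cont T f t l1 Ht Hf) (dd_cont T g t l2 Ht Hg) Hgt eta1 Heta1)
    as [dq [Hdq Hq]].
  destruct (Hf e1 He1) as [d1 [Hd1 H1]]. destruct (Hg e1 He1) as [d2 [Hd2 H2]].
  exists (Rmin dq (Rmin d1 d2)). split; [repeat apply Rmin_pos; auto|].
  intros s Hs Hst.
  assert (Hst1 : Rabs (s - t) < dq) by (eapply Rlt_le_trans; [exact Hst|apply Rmin_l]).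
  assert (Hst2 : Rabs (s - t) < d1) by (eapply Rlt_le_trans; [exact Hst|]; eapply Rle_trans; [apply Rmin_r|apply Rmin_l]).
  assert (Hst3 : Rabs (s - t) < d2) by (eapply Rlt_le_trans; [exact Hst|]; eapply Rle_trans; [apply Rmin_r|apply Rmin_r]).
  destruct (Hq s Hs Hst1) as [Hgs0 Hqs].
  assert (A := H1 s Hs Hst2). assert (B := H2 s Hs Hst3).
  fold sg in A, B.
  set (d := sg - s) in *.
  set (a := f sg - f s - l1 * d) in *.
  set (b := g sg - g s - l2 * d) in *.
  assert (E : f sg / g sg - f s / g s - (l1 * g t - f t * l2) / (g t * g sg) * d
     = (- l2 * d * (f s / g s - f t / g t) + a - (f s / g s) * b) / g sg).
  { unfold a, b. field. auto. }
  rewrite E. rewrite Rabs_div by auto. fold Gs.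
  apply Rle_div_l; auto.
  assert (Hqs1 : Rabs (f s / g s - f t / g t) < 1) by (eapply Rlt_le_trans; [exact Hqs|apply Rmin_l]).
  assert (Hqs2 : Rabs (f s / g s - f t / g t) < e * Gs / (2 * (Rabs l2 + 1))) by (eapply Rlt_le_trans; [exact Hqs|apply Rmin_r]).
  assert (HQs : Rabs (f s / g s) <= Q + 1).
  { unfold Q. replace (f s / g s) with ((f s / g s - f t / g t) + f t / g t) by ring.
    pose proof (Rabs_triang (f s / g s - f t / g t) (f t / g t)). lra. }
  assert (Hd := Rabs_pos d).
  eapply Rle_trans. unfold Rminus. apply Rabs_triang.
  eapply Rle_trans. apply Rplus_le_compat_l. rewrite Rabs_Ropp. apply Rle_refl.
  eapply Rle_trans. apply Rplus_le_compat_r. apply Rabs_triang.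
  rewrite !Rabs_mult, Rabs_Ropp.
  set (qd := Rabs (f s / g s + - (f t / g t))) in *.
  assert (Hqd := Rabs_pos (f s / g s + - (f t / g t))).
  assert (X1 : Rabs l2 * qd <= e * Gs / 2).
  { apply Rle_trans with (Rabs l2 * (e * Gs / (2 * (Rabs l2 + 1)))).
    apply Rmult_le_compat_l; [lra|]. unfold qd; unfold Rminus in Hqs2; lra.
    replace (Rabs l2 * (e * Gs / (2 * (Rabs l2 + 1)))) with ((Rabs l2 / (Rabs l2 + 1)) * (e * Gs / 2)) by (field; lra).
    assert (Rabs l2 / (Rabs l2 + 1) <= 1) by (apply Rle_div_l; lra).
    assert (0 <= e * Gs / 2) by nra. nra. }
  assert (X2 : Rabs (f s / g s) * Rabs b <= (Q + 1) * (e1 * Rabs d)).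
  { apply Rmult_le_compat; auto; apply Rabs_pos. }
  assert (X3 : e1 * (2 + Q) = e * Gs / 2) by (unfold e1; field; lra).
  assert (X4 : Rabs l2 * Rabs d * qd <= e * Gs / 2 * Rabs d) by nra.
  nra.
Qed.

Lemma eps_arg A K : 0 <= K -> (forall e, 0 < e -> 0 <= A + e * K) -> 0 <= A.
Proof.
  intros HK H. apply Rnot_lt_le. intro HA.
  set (e := - A / (K + 1)).
  assert (He : 0 < e) by (unfold e; apply Rdiv_lt_0_compat; lra).
  specialize (H e He).
  assert (e * (K + 1) = - A) by (unfold e; field; lra). nra.
Qed.

Lemma mono T (hT : time_scale T) (hunb : unbounded_above T) f a : T a ->
  (forall t, T t -> a <= t -> exists l, 0 <= l /\ delta_derivative T f t l) ->
  forall ts, T ts -> a <= ts -> f a <= f ts.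
Proof.
  intros Ha hd ts Hts Hats.
  cut (0 <= f ts - f a). lra.
  apply (eps_arg _ (ts - a)). lra.
  intros eps Heps.
  set (h := fun r => f r - f a + eps * (r - a)).
  change (0 <= h ts).
  set (G := fun r => T r /\ a <= r <= ts /\ forall s, T s -> a <= s <= r -> 0 <= h s).
  assert (Ga : G a).
  { split; auto. split; [lra|]. intros s Hs Hs'. assert (s = a) by lra. subst s. unfold h. lra. }
  assert (Gb : bound G). { exists ts. intros r [_ [Hr _]]. lra. }
  destruct (completeness G Gb (ex_intro _ a Ga)) as [m [Hub Hlub]].
  assert (Ham : a <= m) by (apply Hub; auto).
  assert (Hmts : m <= ts). { apply Hlub. intros r [_ [Hr _]]. lra. }
  assert (Kapp : forall d, 0 < d -> exists r, G r /\ m - d < r /\ r <= m).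
  { intros d Hd. apply NNPP. intro Hn.
    assert (m <= m - d); [|lra]. apply Hlub. intros r Gr.
    apply Rnot_lt_le. intro Hr. apply Hn. exists r. split; [exact Gr|]. split; [lra|apply Hub; exact Gr]. }
  assert (Key1 : forall s, T s -> a <= s < m -> 0 <= h s).
  { intros s Hs [H1 H2]. destruct (Kapp (m - s)) as [r [[Tr [Hr Hr']] [Hr1 Hr2]]]; [lra|].
    apply Hr'; auto. lra. }
  assert (Tm : T m).
  { apply (closed_approx T hT). intros e He. destruct (Kapp e He) as [r [[Tr _] [H1 H2]]].
    exists r. split; auto. apply ab_lt'. lra. }
  assert (Key2 : 0 <= h m).
  { apply Rnot_lt_le. intro Hhm.
    destruct (hd m Tm Ham) as [l [Hl Hdd]].
    destruct (dd_cont T f m l Tm Hdd (- h m)) as [d [Hd Hc]]; [lra|].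
    destruct (Kapp d Hd) as [r [[Tr [Hr Hr']] [H1 H2]]].
    assert (Hhr : 0 <= h r) by (apply Hr'; auto; lra).
    assert (Hrm : Rabs (r - m) < d) by (apply ab_lt'; lra).
    pose proof (ab_lt _ _ (Hc r Tr Hrm)).
    unfold h in *. nra. }
  assert (Gm : G m).
  { split; auto. split; [lra|]. intros s Hs [H1 H2].
    destruct (Rle_lt_or_eq_dec s m H2) as [Hsm|Hsm]. apply Key1; auto; lra. subst; auto. }
  destruct (Rle_lt_or_eq_dec m ts Hmts) as [Hlt|Heq].
  2:{ subst m. destruct Gm as [_ [_ Hg]]. apply Hg; auto; lra. }
  exfalso.
  destruct (hd m Tm Ham) as [l [Hl Hdd]].
  pose proof (fj_ge T hunb m) as Hsg.
  destruct (Rle_lt_or_eq_dec _ _ Hsg) as [Hsc|Hsd].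
  -
    set (sg := fjump T m) in *.
    assert (Hsgts : sg <= ts) by (apply fj_le; auto).
    assert (Hex := dd_exact T f m l Tm Hdd). fold sg in Hex.
    assert (Gsg : G sg).
    { split. apply fj_in; auto. split; [lra|].
      intros s Hs [H1 H2]. destruct (Rle_or_lt s m) as [Hsm|Hsm].
      - destruct Gm as [_ [_ Hg]]. apply Hg; auto; lra.
      - assert (sg <= s) by (apply fj_le; auto). assert (s = sg) by lra. subst s.
        unfold h in *. nra. }
    assert (sg <= m) by (apply Hub; auto). lra.
  -
    assert (He2 : 0 < eps / 2) by lra.
    destruct (Hdd _ He2) as [d [Hd Hs]].
    rewrite <- Hsd in Hs.
    set (d' := Rmin d (ts - m)).
    assert (Hd' : 0 < d') by (apply Rmin_pos; lra).
    assert (Hex : exists s, T s /\ m < s /\ s < m + d').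
    { apply NNPP. intro Hn. assert (m + d' <= fjump T m); [|lra].
      apply (fj_glb T hunb). intros s Hs1 Hs2. apply Rnot_lt_le. intro. apply Hn. eauto. }
    destruct Hex as [s [Ts [Hs1 Hs2]]].
    assert (Hs3 : s < m + d) by (assert (d' <= d) by apply Rmin_l; lra).
    assert (Hs4 : s <= ts) by (assert (d' <= ts - m) by apply Rmin_r; lra).
    assert (Gs : G s).
    { split; auto. split; [lra|]. intros s' Hs' [H1 H2]. destruct (Rle_or_lt s' m) as [Hsm|Hsm].
      - destruct Gm as [_ [_ Hg]]. apply Hg; auto; lra.
      - assert (Hq : Rabs (s' - m) < d) by (apply ab_lt'; lra).
        pose proof (ab_le _ _ (Hs s' Hs' Hq)) as [Q1 Q2].
        rewrite Rabs_left in Q1, Q2 by lra.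
        unfold h in *. nra. }
    assert (s <= m) by (apply Hub; auto). lra.
Qed.

Lemma mono_dec T (hT : time_scale T) (hunb : unbounded_above T) f a : T a ->
  (forall t, T t -> a <= t -> exists l, l <= 0 /\ delta_derivative T f t l) ->
  forall ts, T ts -> a <= ts -> f ts <= f a.
Proof.
  intros Ha hd ts Hts Hats.
  assert (H := mono T hT hunb (fun r => 0 + (-1) * f r) a Ha).
  cut (0 + -1 * f a <= 0 + -1 * f ts). lra.
  apply H; auto. intros t Ht Hat. destruct (hd t Ht Hat) as [l [Hl Hd]].
  exists (0 + -1 * l). split. lra. apply dd_lin; auto. apply dd_const.
Qed.

Theorem corollary27
  (T : R -> Prop) (hT : time_scale T) (hunb : unbounded_above T)
  (t0 : R) (ht0 : T t0)
  (b c : R) (hb : 0 <= b) (hbc : b < c)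
  (x0 y0 z0 : R) (hx0 : 0 < x0) (hy0 : 0 < y0) (hz0 : 0 <= z0)
  (x y z : R -> R)
  (hpos : forall t, T t -> t0 <= t -> 0 < x t /\ 0 < y t /\ 0 <= z t)
  (hxi : x t0 = x0) (hyi : y t0 = y0) (hzi : z t0 = z0)
  (hx : forall t, T t -> t0 <= t ->
     delta_derivative T x t (- (b * x t * y (fjump T t)) / (x t + y t)))
  (hy : forall t, T t -> t0 <= t ->
     delta_derivative T y t
       ((b * x t * y (fjump T t)) / (x t + y t) - c * y (fjump T t)))
  (hz : forall t, T t -> t0 <= t ->
     delta_derivative T z t (c * y (fjump T t))) :
  exists alpha : R,
    0 < alpha < x0 + y0 + z0 /\
    converges_at_infty T x alpha /\
    converges_at_infty T y 0 /\
    converges_at_infty T z (x0 + y0 + z0 - alpha).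
Proof.
  assert (hc : 0 < c) by lra.
  assert (Hsg : forall t, T t -> t0 <= t -> T (fjump T t) /\ t0 <= fjump T t /\ t <= fjump T t).
  { intros t Ht Ht0. pose proof (fj_ge T hunb t). split; [apply fj_in; auto|lra]. }
  assert (Hys : forall t, T t -> t0 <= t -> 0 < y (fjump T t)).
  { intros t Ht Ht0. destruct (Hsg t Ht Ht0) as [A [B _]]. apply hpos; auto. }
  set (N := x0 + y0 + z0).
  assert (dS : forall t, T t -> t0 <= t -> delta_derivative T (fun r => x r + y r + z r) t 0).
  { intros t Ht Ht0.
    assert (Hu : x t + y t <> 0) by (destruct (hpos t Ht Ht0) as [? [? ?]]; lra).
    pose proof (dd_lin T y z t _ _ 1 (hy t Ht Ht0) (hz t Ht Ht0)) as H23.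
    pose proof (dd_lin T x _ t _ _ 1 (hx t Ht Ht0) H23) as H.
    eapply dd_ext; [| |exact H]. intros r; simpl; ring. field. auto. }
  assert (Scon : forall t, T t -> t0 <= t -> x t + y t + z t = N).
  { intros t Ht Ht0.
    assert (A := mono T hT hunb (fun r => x r + y r + z r) t0 ht0).
    assert (B := mono_dec T hT hunb (fun r => x r + y r + z r) t0 ht0).
    simpl in A, B.
    assert (x t0 + y t0 + z t0 <= x t + y t + z t) by
      (apply A; auto; intros; exists 0; split; [lra|apply dS; auto]).
    assert (x t + y t + z t <= x t0 + y t0 + z t0) by
      (apply B; auto; intros; exists 0; split; [lra|apply dS; auto]).
    unfold N. rewrite <- hxi, <- hyi, <- hzi. lra. }
  assert (xdec : forall t1 t, T t1 -> T t -> t0 <= t1 -> t1 <= t -> x t <= x t1).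
  { intros t1 t Ht1 Ht H1 H2. apply (mono_dec T hT hunb x t1 Ht1); auto.
    intros s Hs Hs1. exists (- (b * x s * y (fjump T s)) / (x s + y s)). split; [|apply hx; auto; lra].
    destruct (hpos s Hs ltac:(lra)) as [? [? ?]]. pose proof (Hys s Hs ltac:(lra)).
    replace (- (b * x s * y (fjump T s)) / (x s + y s)) with (- (b * x s * y (fjump T s) / (x s + y s))) by (field; lra).
    assert (0 <= b * x s * y (fjump T s) / (x s + y s)); [|lra].
    apply Rle_mult_inv_pos; [|lra]. apply Rmult_le_pos; [apply Rmult_le_pos|]; lra. }
  assert (zinc : forall t1 t, T t1 -> T t -> t0 <= t1 -> t1 <= t -> z t1 <= z t).
  { intros t1 t Ht1 Ht H1 H2. apply (mono T hT hunb z t1 Ht1); auto.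
    intros s Hs Hs1. exists (c * y (fjump T s)). split; [|apply hz; auto; lra].
    pose proof (Hys s Hs ltac:(lra)). nra. }
  set (E := fun r => exists t, T t /\ t0 <= t /\ r = - x t).
  assert (Eb : bound E).
  { exists 0. intros r [t [Ht [Ht0 ->]]]. destruct (hpos t Ht Ht0) as [? _]. lra. }
  assert (Ene : exists r, E r) by (exists (- x t0); exists t0; repeat split; auto; lra).
  destruct (completeness E Eb Ene) as [mA [HAub HAlub]].
  set (alpha := - mA).
  assert (Ha1 : forall t, T t -> t0 <= t -> alpha <= x t).
  { intros t Ht Ht0. assert (- x t <= mA) by (apply HAub; exists t; auto). unfold alpha; lra. }
  assert (Ha2 : forall eta, 0 < eta -> exists t1, T t1 /\ t0 <= t1 /\ x t1 < alpha + eta).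
  { intros eta He. apply NNPP. intro Hn. assert (mA <= mA - eta); [|lra].
    apply HAlub. intros r [t [Ht [Ht0 ->]]]. apply Rnot_lt_le. intro. apply Hn.
    exists t. repeat split; auto. unfold alpha; lra. }
  set (Z := fun r => exists t, T t /\ t0 <= t /\ r = z t).
  assert (Zb : bound Z).
  { exists N. intros r [t [Ht [Ht0 ->]]]. destruct (hpos t Ht Ht0) as [? [? ?]].
    pose proof (Scon t Ht Ht0). lra. }
  assert (Zne : exists r, Z r) by (exists (z t0); exists t0; repeat split; auto; lra).
  destruct (completeness Z Zb Zne) as [zeta [HZub HZlub]].
  assert (Hz1 : forall t, T t -> t0 <= t -> z t <= zeta).
  { intros t Ht Ht0. apply HZub; exists t; auto. }
  assert (Hz2 : forall eta, 0 < eta -> exists t1, T t1 /\ t0 <= t1 /\ zeta - eta < z t1).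
  { intros eta He. apply NNPP. intro Hn. assert (zeta <= zeta - eta); [|lra].
    apply HZlub. intros r [t [Ht [Ht0 ->]]]. apply Rnot_lt_le. intro. apply Hn.
    exists t. repeat split; auto. }
  assert (Cx : forall eta, 0 < eta -> exists t1, T t1 /\ t0 <= t1 /\
      forall t, T t -> t1 <= t -> alpha <= x t < alpha + eta).
  { intros eta He. destruct (Ha2 eta He) as [t1 [Ht1 [Ht10 Hx1]]]. exists t1. repeat split; auto.
    apply Ha1; auto; lra. pose proof (xdec t1 t Ht1 H Ht10 H0). lra. }
  assert (Cz : forall eta, 0 < eta -> exists t1, T t1 /\ t0 <= t1 /\
      forall t, T t -> t1 <= t -> zeta - eta < z t <= zeta).
  { intros eta He. destruct (Hz2 eta He) as [t1 [Ht1 [Ht10 Hx1]]]. exists t1. repeat split; auto.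
    pose proof (zinc t1 t Ht1 H Ht10 H0). lra. apply Hz1; auto; lra. }
  assert (Cxz : forall eta, 0 < eta -> exists t1, T t1 /\ t0 <= t1 /\
      forall t, T t -> t1 <= t -> alpha <= x t < alpha + eta /\ zeta - eta < z t <= zeta).
  { intros eta He. destruct (Cx eta He) as [t1 [Ht1 [Ht10 H1]]]. destruct (Cz eta He) as [t2 [Ht2 [Ht20 H2]]].
    destruct (Rle_or_lt t1 t2).
    - exists t2. split; [auto|split; [auto|]]. intros t Ht Htt. split; [apply H1|apply H2]; auto; lra.
    - exists t1. split; [auto|split; [auto|]]. intros t Ht Htt. split; [apply H1|apply H2]; auto; lra. }
  set (L := N - alpha - zeta).
  assert (HL1 : 0 <= L).
  { apply Rnot_lt_le. intro HL. destruct (Cxz (- L / 2) ltac:(lra)) as [t1 [Ht1 [Ht10 H1]]].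
    destruct (H1 t1 Ht1 (Rle_refl _)) as [[A1 A2] [A3 A4]].
    pose proof (Scon t1 Ht1 Ht10). destruct (hpos t1 Ht1 Ht10) as [? [? ?]]. unfold L in *. lra. }
  assert (HL2 : L <= 0).
  { apply Rnot_lt_le. intro HL. destruct (Cx (L / 2) ltac:(lra)) as [t2 [Ht2 [Ht20 H2]]].
    assert (Hyl : forall t, T t -> t2 <= t -> L / 2 < y t).
    { intros t Ht Htt. destruct (H2 t Ht Htt). pose proof (Scon t Ht ltac:(lra)).
      pose proof (Hz1 t Ht ltac:(lra)). unfold L in *. lra. }
    set (k := c * L / 2). assert (Hk : 0 < k) by (unfold k; nra).
    assert (Hg := mono T hT hunb (fun r => z r + (- k) * r) t2 Ht2).
    destruct (hunb (t2 + N / k)) as [t [Ht Htl]].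
    assert (Hn : 0 < N) by (unfold N; lra).
    assert (HNk : 0 < N / k) by (apply Rdiv_lt_0_compat; lra).
    assert (z t2 + - k * t2 <= z t + - k * t).
    { apply Hg; auto; try lra. intros s Hs Hs2.
      exists (c * y (fjump T s) + - k * 1). split.
      - destruct (Hsg s Hs ltac:(lra)) as [A [B C]]. pose proof (Hyl _ A ltac:(lra)). unfold k. nra.
      - apply dd_lin. apply hz; auto; lra. apply dd_id. }
    assert (k * (t - t2) > N).
    { replace N with (k * (N / k)) by (field; lra). apply Rmult_lt_compat_l; lra. }
    pose proof (Scon t Ht ltac:(lra)). destruct (hpos t Ht ltac:(lra)) as [? [? ?]].
    destruct (hpos t2 Ht2 ltac:(lra)) as [? [? ?]]. lra. }
  assert (HL : N = alpha + zeta) by (unfold L in *; lra).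
  (* positivity of alpha via v = x / y *)
  set (v := fun r => x r / y r).
  assert (dv : forall t, T t -> t0 <= t -> delta_derivative T v t ((c - b) * x t / y t)).
  { intros t Ht Ht0. destruct (hpos t Ht Ht0) as [? [? ?]]. pose proof (Hys t Ht Ht0).
    eapply dd_ext; [| |apply (dd_quot T x y t _ _ Ht (hx t Ht Ht0) (hy t Ht Ht0)); lra].
    intros r; reflexivity. field. repeat split; lra. }
  set (v0 := x0 / y0).
  assert (Hv0 : 0 < v0) by (unfold v0; apply Rdiv_lt_0_compat; lra).
  assert (vinc : forall t, T t -> t0 <= t -> v0 <= v t).
  { intros t Ht Ht0. unfold v0; rewrite <- hxi, <- hyi. change (v t0 <= v t).
    apply (mono T hT hunb v t0 ht0); auto. intros s Hs Hs0. exists ((c - b) * x s / y s). split.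
    destruct (hpos s Hs Hs0) as [? [? ?]]. apply Rle_mult_inv_pos; nra. apply dv; auto. }
  assert (vlin : forall t, T t -> t0 <= t -> v0 + (c - b) * v0 * (t - t0) <= v t).
  { intros t Ht Ht0.
    assert (v t0 + - ((c - b) * v0) * t0 <= v t + - ((c - b) * v0) * t).
    { apply (mono T hT hunb (fun r => v r + - ((c - b) * v0) * r) t0 ht0); auto.
      intros s Hs Hs0. exists ((c - b) * x s / y s + - ((c - b) * v0) * 1). split.
      - pose proof (vinc s Hs Hs0). unfold v in H. 
        replace ((c - b) * x s / y s) with ((c - b) * (x s / y s)) by (unfold Rdiv; ring). nra.
      - apply dd_lin. apply dv; auto. apply dd_id. }
    assert (v t0 = v0) by (unfold v, v0; rewrite hxi, hyi; auto). lra. }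
  set (K := 2 * b / ((c - b) * (c - b) * v0)).
  assert (HK : 0 <= K) by (unfold K; apply Rle_mult_inv_pos; [lra|]; apply Rmult_lt_0_compat; [nra|lra]).
  destruct (hunb (t0 + K)) as [t1 [Ht1 Ht1K]].
  assert (Ht10 : t0 <= t1) by lra.
  destruct (hpos t1 Ht1 Ht10) as [Hx1 [Hy1 Hz1']].
  assert (Hv1 : (c - b) * x t1 >= 2 * b * y t1).
  { pose proof (vlin t1 Ht1 Ht10). unfold v in H.
    assert ((c - b) * v0 * (t1 - t0) >= 2 * b / (c - b)).
    { apply Rle_ge. apply Rle_trans with ((c - b) * v0 * K).
      - unfold K. right. field. split; lra.
      - apply Rmult_le_compat_l; nra. }
    assert (x t1 / y t1 >= 2 * b / (c - b)) by lra.
    assert (x t1 = (x t1 / y t1) * y t1) by (field; lra).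
    assert (2 * b = (2 * b / (c - b)) * (c - b)) by (field; lra).
    set (q := x t1 / y t1) in *. set (r := 2 * b / (c - b)) in *.
    assert (q * ((c - b) * y t1) >= r * ((c - b) * y t1)).
    { apply Rle_ge. apply Rmult_le_compat_r. apply Rmult_le_pos; lra. lra. }
    rewrite H2, H3. nra. }
  assert (Gm : forall t, T t -> t1 <= t -> x t1 + b / c * z t1 <= x t + b / c * z t).
  { intros t Ht Htt. apply (mono T hT hunb (fun r => x r + b / c * z r) t1 Ht1); auto.
    intros s Hs Hs1. destruct (hpos s Hs ltac:(lra)) as [? [? ?]]. pose proof (Hys s Hs ltac:(lra)).
    exists (b * y (fjump T s) * y s / (x s + y s)). split.
    - apply Rle_mult_inv_pos; [|lra]. apply Rmult_le_pos; [apply Rmult_le_pos|]; lra.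
    - eapply dd_ext; [| |apply dd_lin; [apply hx|apply hz]; auto; lra]. intros; reflexivity.
      field. split; lra. }
  assert (Hxlow : forall t, T t -> t0 <= t -> x t1 / 2 <= x t).
  { intros t Ht Ht0. destruct (Rle_or_lt t1 t) as [Htt|Htt].
    - pose proof (Gm t Ht Htt). pose proof (Scon t Ht Ht0). pose proof (Scon t1 Ht1 Ht10).
      destruct (hpos t Ht Ht0) as [? [? ?]].
      assert (c * x t + b * z t >= c * x t1 + b * z t1).
      { assert (HH : c * (x t1 + b / c * z t1) <= c * (x t + b / c * z t)) by (apply Rmult_le_compat_l; lra).
        replace (c * (x t1 + b / c * z t1)) with (c * x t1 + b * z t1) in HH by (field; lra).
        replace (c * (x t + b / c * z t)) with (c * x t + b * z t) in HH by (field; lra). lra. }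
      assert (HH2 : (c - b) * (x t1 / 2) <= (c - b) * x t) by nra.
      apply Rmult_le_reg_l with (c - b); lra.
    - pose proof (xdec t t1 Ht Ht1 Ht0 ltac:(lra)). lra. }
  assert (Hapos : x t1 / 2 <= alpha).
  { unfold alpha. assert (mA <= - (x t1 / 2)); [|lra]. apply HAlub.
    intros r [t [Ht [Ht0 ->]]]. pose proof (Hxlow t Ht Ht0). lra. }
  exists alpha. split; [split|split; [|split]].
  - lra.
  - pose proof (Ha1 t0 ht0 (Rle_refl _)) as Hq. rewrite hxi in Hq. unfold N. lra.
  - intros eta He. destruct (Cx eta He) as [t2 [Ht2 [_ H2]]]. exists t2. intros t Ht Htt.
    destruct (H2 t Ht Htt). apply ab_lt'. lra.
  - intros eta He. destruct (Cxz (eta / 2) ltac:(lra)) as [t2 [Ht2 [Ht20 H2]]]. exists t2. intros t Ht Htt.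
    destruct (H2 t Ht Htt) as [[A1 A2] [A3 A4]]. pose proof (Scon t Ht ltac:(lra)). apply ab_lt'. lra.
  - intros eta He. destruct (Cz eta He) as [t2 [Ht2 [_ H2]]]. exists t2. intros t Ht Htt.
    destruct (H2 t Ht Htt). apply ab_lt'. unfold N in *. lra.
Qed.
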